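(* For every $\epsilon>0$ there is $\epsilon'>0$ depending only on $\epsilon$ such that: if $f:\{0,1\}^n\to\{-1,1\}$ and $B$ is a symmetric $n\times n$ matrix over $\mathbb F_2$ with zero diagonal satisfying $\mathbb E_y\hat{f_y}^2(By)\ge\epsilon$, then there exists a quadratic polynomial function $g$ whose distance from $f$ is at most $\frac12-\epsilon'$.
   Context: $\{0,1\}^n$ is identified with $\mathbb F_2^n$. $\hat h(\alpha)=\mathbb E_z h(z)(-1)^{\langle\alpha,z\rangle}$; $f_y(x)=f(x)f(x+y)$; $y$ uniform. A quadratic polynomial function is $g=(-1)^{P}$ with $P$ an $n$-variate polynomial over $\mathbb F_2$ of degree at most $2$. Distance is the fraction of points where two functions differ. *)

(* Defs.v *)
From HB Require Import structures.
From mathcomp Require Import all_boot all_order all_algebra.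
From mathcomp Require Import mpoly.
Set Implicit Arguments. Unset Strict Implicit. Unset Printing Implicit Defensive.
Import Order.TTheory GRing.Theory Num.Theory.
Local Open Scope ring_scope.

(* {0,1}^n is identified with F_2^n = 'rV['F_2]_n. *)

Definition sgnF2 (R : ringType) (b : 'F_2) : R := if b == 0 then 1 else -1.

Definition dotF2 n (a z : 'rV['F_2]_n) : 'F_2 := (a *m z^T) ord0 ord0.

Definition fourier (R : fieldType) n (h : 'rV['F_2]_n -> R) (alpha : 'rV['F_2]_n) : R :=
  (2 ^+ n)^-1 * \sum_(z : 'rV['F_2]_n) h z * sgnF2 R (dotF2 alpha z).

Definition fder (R : ringType) n (f : 'rV['F_2]_n -> R) (y : 'rV['F_2]_n) :=
  fun x : 'rV['F_2]_n => f x * f (x + y).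

(* B y, with y a vector (rows-as-vectors convention: (B y^T)^T) *)
Definition matapp n (B : 'M['F_2]_n) (y : 'rV['F_2]_n) : 'rV['F_2]_n := (B *m y^T)^T.

Definition corrB (R : fieldType) n (f : 'rV['F_2]_n -> R) (B : 'M['F_2]_n) : R :=
  (2 ^+ n)^-1 * \sum_(y : 'rV['F_2]_n) (fourier (fder f y) (matapp B y)) ^+ 2.

(* quadratic polynomial function g = (-1)^P, P in F_2[x_1..x_n] of degree <= 2 *)
Definition quad_poly_fun (R : ringType) n (P : {mpoly 'F_2[n]}) : 'rV['F_2]_n -> R :=
  fun x => sgnF2 R (P.@[fun i => x ord0 i]).

Definition is_quadratic n (P : {mpoly 'F_2[n]}) : bool := (msize P <= 3)%N.

Definition dist (R : numFieldType) n (f g : 'rV['F_2]_n -> R) : R :=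
  #|[set x : 'rV['F_2]_n | f x != g x]|%:R / (2 ^+ n).

(* Main.v *)
Require Import Defs.
From HB Require Import structures.
From mathcomp Require Import all_boot all_order all_algebra.
From mathcomp Require Import mpoly.
From mathcomp Require Import ring lra.
Import Order.TTheory GRing.Theory Num.Theory.
Local Open Scope ring_scope.

Lemma F2_cases (a : 'F_2) : a = 0 \/ a = 1.
Proof. by case: a => [[|[|//]] ?]; [left|right]; apply/val_inj. Qed.

Lemma F2_addvv (a : 'F_2) : a + a = 0.
Proof. by case: (F2_cases a) => ->; apply/val_inj. Qed.

Lemma sgnF2D (R : ringType) (a b : 'F_2) : sgnF2 R (a + b) = sgnF2 R a * sgnF2 R b.
Proof.
by case: (F2_cases a) => ->; case: (F2_cases b) => ->; rewrite /sgnF2 /= ?mulr1 ?mul1r ?mulrNN ?mulr1.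
Qed.

Lemma sgnF2_sq (R : ringType) (a : 'F_2) : sgnF2 R a * sgnF2 R a = 1.
Proof. by rewrite -sgnF2D F2_addvv. Qed.

Lemma sgnF2_0 (R : ringType) : sgnF2 R 0 = 1.
Proof. by []. Qed.

Lemma sgnF2_1 (R : ringType) : sgnF2 R 1 = -1.
Proof. by []. Qed.

Lemma dotF2E n (a z : 'rV['F_2]_n) : dotF2 a z = \sum_k a 0 k * z 0 k.
Proof. by rewrite /dotF2 !mxE; apply: eq_bigr => k _; rewrite mxE. Qed.

Lemma dotF2C n (a z : 'rV['F_2]_n) : dotF2 a z = dotF2 z a.
Proof. by rewrite !dotF2E; apply: eq_bigr => k _; rewrite mulrC. Qed.

Lemma dotF2Dr n (a z w : 'rV['F_2]_n) : dotF2 a (z + w) = dotF2 a z + dotF2 a w.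
Proof. by rewrite !dotF2E -big_split; apply: eq_bigr => k _; rewrite mxE mulrDr. Qed.

Lemma dotF2Dl n (a z w : 'rV['F_2]_n) : dotF2 (z + w) a = dotF2 z a + dotF2 w a.
Proof. by rewrite dotF2C dotF2Dr !(dotF2C _ a). Qed.

Lemma dotF20r n (a : 'rV['F_2]_n) : dotF2 a 0 = 0.
Proof. by rewrite dotF2E big1 // => k _; rewrite mxE mulr0. Qed.

Lemma rv_addvv n (x : 'rV['F_2]_n) : x + x = 0.
Proof. by apply/matrixP => i j; rewrite !mxE F2_addvv. Qed.

Lemma card_rvF2 n : #|{: 'rV['F_2]_n}| = (2 ^ n)%N.
Proof. by rewrite card_mx card_Fp // mul1n. Qed.

Lemma orth (R : numFieldType) n (y : 'rV['F_2]_n) :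
  \sum_(a : 'rV['F_2]_n) sgnF2 R (dotF2 a y) = if y == 0 then 2 ^+ n else 0.
Proof.
have [->|ny] := eqVneq y 0.
  rewrite (eq_bigr (fun _ => 1)) => [|a _]; last by rewrite dotF20r.
  by rewrite sumr_const card_rvF2 natrX.
have [i yi] : exists i, y 0 i != 0.
  apply/existsP; apply: contraR ny => /existsPn H.
  by apply/eqP/matrixP => r k; rewrite ord1 mxE; apply/eqP/negPn/H.
have yi1 : y 0 i = 1 by case: (F2_cases (y 0 i)) yi => -> //; rewrite eqxx.
set S := \sum_a _.
have HS : S = - S.
  rewrite {1}/S (reindex_inj (addIr (delta_mx 0 i))) /=.
  rewrite /S -sumrN; apply: eq_bigr => a _.
  rewrite dotF2Dl sgnF2D.
  have -> : dotF2 (delta_mx 0 i) y = 1.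
    rewrite dotF2E (bigD1 i) //= big1 ?addr0 => [|k ki]; first by rewrite mxE !eqxx mul1r.
    by rewrite mxE (negbTE ki) andbF mul0r.
  by rewrite sgnF2_1 mulrN1.
have : S *+ 2 == 0 by rewrite mulr2n {1}HS addNr.
by rewrite mulrn_eq0 /= => /eqP.
Qed.

Lemma rv_oppv n (y : 'rV['F_2]_n) : - y = y.
Proof. by apply/eqP; rewrite eq_sym -addr_eq0 rv_addvv. Qed.

Section Fourier.
Variable R : numFieldType.
Variable n : nat.
Local Notation V := 'rV['F_2]_n.
Local Notation N := ((2:R) ^+ n).
Local Notation chi a z := (sgnF2 R (dotF2 a z)).

Lemma N_neq0 : N != 0.
Proof. by rewrite expf_neq0 // pnatr_eq0. Qed.

Definition acorr (h : V -> R) (y : V) : R := N^-1 * \sum_x h x * h (x + y).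

Lemma acorr_chi (h : V -> R) a :
  N^-1 * \sum_y acorr h y * chi a y = fourier h a ^+ 2.
Proof.
rewrite /fourier /acorr expr2 mulrACA.
under eq_bigr do rewrite -mulrA.
rewrite -mulr_sumr [LHS]mulrA; congr (_ * _).
rewrite mulr_suml; under eq_bigr do rewrite mulr_suml.
rewrite exchange_big /=; apply: eq_bigr => x _.
rewrite (reindex_inj (addrI x)) /= mulr_sumr; apply: eq_bigr => y _.
rewrite addrA rv_addvv add0r dotF2Dr sgnF2D; ring.
Qed.

Lemma acorr_inv (h : V -> R) y :
  acorr h y = \sum_a fourier h a ^+ 2 * chi a y.
Proof.
under eq_bigr do rewrite -acorr_chi -mulrA mulr_suml.
rewrite -mulr_sumr exchange_big /=.
under eq_bigr do under eq_bigr do rewrite -mulrA -sgnF2D -dotF2Dr.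
under eq_bigr do rewrite -mulr_sumr orth addr_eq0 rv_oppv.
rewrite (bigD1 y) //= eqxx big1 ?addr0 => [|z /negbTE ->]; last by rewrite mulr0.
by rewrite mulrCA mulVf ?mulr1 // N_neq0.
Qed.

Lemma acorr_sq (h : V -> R) :
  N^-1 * \sum_y acorr h y ^+ 2 = \sum_a fourier h a ^+ 4.
Proof.
under eq_bigr do rewrite expr2 {2}acorr_inv mulr_sumr.
rewrite exchange_big /= mulr_sumr; apply: eq_bigr => a _.
under eq_bigr do rewrite mulrCA.
by rewrite -mulr_sumr mulrCA acorr_chi -exprD.
Qed.

Lemma parseval (h : V -> R) : (forall x, h x * h x = 1) ->
  \sum_a fourier h a ^+ 2 = 1.
Proof.
move=> hh; rewrite (eq_bigr (fun a => fourier h a ^+ 2 * chi a 0)) => [|a _]; last first.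
  by rewrite dotF20r sgnF2_0 mulr1.
rewrite -acorr_inv /acorr (eq_bigr (fun _ => 1)) => [|x _]; last by rewrite addr0 hh.
by rewrite sumr_const card_rvF2 natrX mulVf // N_neq0.
Qed.

End Fourier.
Arguments acorr {R n}.

Definition qf n (B : 'M['F_2]_n) (x : 'rV['F_2]_n) : 'F_2 :=
  \sum_(i : 'I_n) \sum_(j : 'I_n) (if (i < j)%N then B i j * x 0 i * x 0 j else 0).

Arguments qf {n}.

Lemma matappE n (B : 'M['F_2]_n) y k : matapp B y 0 k = \sum_j B k j * y 0 j.
Proof. by rewrite /matapp !mxE; apply: eq_bigr => j _; rewrite mxE. Qed.

Lemma qf_polar n (B : 'M['F_2]_n) x y : B^T = B -> (forall i, B i i = 0) ->
  qf B (x + y) = qf B x + qf B y + dotF2 (matapp B y) x.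
Proof.
move=> BT Bd.
have Bs (i j : 'I_n) : B j i = B i j by rewrite -{1}BT mxE.
transitivity (qf B x + qf B y + \sum_(i : 'I_n) \sum_(j : 'I_n)
   (if (i < j)%N then B i j * (x 0 i * y 0 j + y 0 i * x 0 j) else 0)).
  rewrite /qf -!big_split; apply: eq_bigr => i _; rewrite -!big_split.
  apply: eq_bigr => j _; rewrite !mxE; case: ifP => _; first by (have E : forall a b c d e : 'F_2, a*(b+c)*(d+e) = a*b*d + a*c*e + a*(b*e+c*d) by move=> *; ring); apply: E.
  by have E : (0:'F_2) = 0 + 0 + 0 by rewrite !addr0.

congr (_ + _).
rewrite dotF2E.
under [RHS]eq_bigr do rewrite matappE mulr_suml.
transitivity (\sum_(i : 'I_n) \sum_(j : 'I_n) ((if (i < j)%N then B i j * y 0 j * x 0 i else 0)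
                         + (if (j < i)%N then B i j * y 0 j * x 0 i else 0))); last first.
  apply: eq_bigr => i _; apply: eq_bigr => j _.
  case: ltngtP => [h|h|h]; rewrite ?addr0 ?add0r //.
  have -> : j = i by apply: val_inj.
  by rewrite Bd !mul0r.
rewrite [RHS](eq_bigr (fun i : 'I_n => \sum_(j : 'I_n) (if (i < j)%N then B i j * y 0 j * x 0 i else 0)
      + \sum_(j : 'I_n) (if (j < i)%N then B i j * y 0 j * x 0 i else 0))) => [|i _]; last first.
  by rewrite big_split.
rewrite big_split /= [X in _ = _ + X]exchange_big /= -big_split /=.
apply: eq_bigr => i _; rewrite -big_split; apply: eq_bigr => j _.
rewrite (Bs i j); case: ifP => _; first by (have E : forall a b c d e : 'F_2, a*(b*c+d*e) = a*c*b + a*d*e by move=> *; ring); apply: E.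
by have E : (0:'F_2) = 0 + 0 by rewrite !addr0.
Qed.

Lemma quad_eval n (B : 'M['F_2]_n) (a : 'rV['F_2]_n) (b : 'F_2) (x : 'rV['F_2]_n) :
  let P : {mpoly 'F_2[n]} :=
    \sum_(i : 'I_n) \sum_(j : 'I_n) (if (i < j)%N then B i j *: ('X_i * 'X_j) else 0)
    + \sum_(i : 'I_n) a 0 i *: 'X_i + b%:MP in
  P.@[fun i => x ord0 i] = qf B x + dotF2 a x + b /\ is_quadratic P.
Proof.
move=> P; split.
  rewrite /P !mevalD mevalC !raddf_sum /= dotF2E /qf; congr (_ + _ + _).
    apply: eq_bigr => i _; rewrite raddf_sum; apply: eq_bigr => j _ /=.
    case: ifP => _; last by rewrite meval0.
    by rewrite mevalZ mevalM !mevalXU !ord1 mulrA.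
  by apply: eq_bigr => i _; rewrite mevalZ mevalXU; congr (_ * x _ _); apply: val_inj.
rewrite /is_quadratic /P.
have H3 : forall p q : {mpoly 'F_2[n]}, (msize p <= 3)%N -> (msize q <= 3)%N -> (msize (p + q) <= 3)%N.
  by move=> p q hp hq; apply: leq_trans (msizeD_le _ _) _; rewrite geq_max hp hq.
have H0 : (msize (0 : {mpoly 'F_2[n]}) <= 3)%N by rewrite msize0.
apply: (H3); first apply: (H3).
- apply: (big_ind (fun p => msize p <= 3)%N) => // i _.
  apply: (big_ind (fun p => msize p <= 3)%N) => // j _.
  case: ifP => _ //; apply: leq_trans (msizeZ_le _ _) _.
  by rewrite -mpolyXD msizeX mdegD !mdeg1.
- apply: (big_ind (fun p => msize p <= 3)%N) => // i _.
  by apply: leq_trans (msizeZ_le _ _) _; rewrite msizeX mdeg1.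
- by rewrite msizeC; case: (b != 0).
Qed.

Lemma sgnF2_pm (R : ringType) b : sgnF2 R b = 1 \/ sgnF2 R b = -1.
Proof. by rewrite /sgnF2; case: ifP; [left|right]. Qed.

Lemma ind_pm (R : realFieldType) (u v : R) : (u = 1 \/ u = -1) -> (v = 1 \/ v = -1) ->
  ((u != v)%:R : R) = (1 - u * v) / 2.
Proof.
have n1 : (1 : R) != -1 by apply/eqP; lra.
have n2 : (-1 : R) != 1 by apply/eqP; lra.
case=> ->; case=> ->; rewrite ?eqxx /=.
- by rewrite mulr1 subrr mul0r.
- by case: eqP => [H|_] /=; [exfalso; lra|field].
- by case: eqP => [H|_] /=; [exfalso; lra|field].
- by rewrite mulrNN mulr1 subrr mul0r.
Qed.

Lemma h_corr (R : numFieldType) n (f : 'rV['F_2]_n -> R) (B : 'M['F_2]_n) y :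
  B^T = B -> (forall i, B i i = 0) ->
  fourier (fder f y) (matapp B y) ^+ 2
  = acorr (fun x => f x * sgnF2 R (qf B x)) y ^+ 2.
Proof.
move=> BT Bd.
have -> : acorr (fun x => f x * sgnF2 R (qf B x)) y
   = sgnF2 R (qf B y) * fourier (fder f y) (matapp B y).
  rewrite /acorr /fourier /fder mulrCA; congr (_ * _); rewrite mulr_sumr.
  apply: eq_bigr => x _; rewrite qf_polar // !sgnF2D.
  set u := sgnF2 R (qf B x); have hu : u * u = 1 by exact: sgnF2_sq.
  transitivity ((u * u) * (sgnF2 R (qf B y) * (f x * f (x + y) * sgnF2 R (dotF2 (matapp B y) x)))).
    by ring.
  by rewrite hu mul1r.
by rewrite [RHS]exprMn -[sgnF2 R (qf B y) ^+ 2]/(sgnF2 R (qf B y) * sgnF2 R (qf B y)) sgnF2_sq mul1r.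
Qed.

Theorem corollary6p4 (R : realFieldType) (eps : R) :
  0 < eps ->
  exists eps' : R, 0 < eps' /\
    forall (n : nat) (f : 'rV['F_2]_n -> R) (B : 'M['F_2]_n),
      (forall x, f x = 1 \/ f x = -1) ->
      B^T = B -> (forall i, B i i = 0) ->
      eps <= corrB f B ->
      exists P : {mpoly 'F_2[n]},
        is_quadratic P /\ dist f (quad_poly_fun R P) <= 2^-1 - eps'.
Proof.
move=> eps0; exists (eps / 2); split; first by rewrite divr_gt0.
move=> n f B hf BT Bd heps.
pose h := fun x => f x * sgnF2 R (qf B x).
have hh : forall x, h x * h x = 1.
  move=> x; rewrite /h mulrACA sgnF2_sq mulr1.
  by case: (hf x) => ->; rewrite ?mulr1 ?mulrNN ?mulr1.
have hc : corrB f B = \sum_a fourier h a ^+ 4.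
  rewrite /corrB -acorr_sq; congr (_ * _); apply: eq_bigr => y _.
  exact: h_corr.
have hP := @parseval R n h hh.
pose F := fun a => fourier h a ^+ 2.
have [a0 _ Hmax] := @arg_maxP _ R _ 0 xpredT F isT.
have HM : eps <= F a0.
  apply: le_trans heps _; rewrite hc.
  apply: (@le_trans _ _ (\sum_a F a * F a0)).
    apply: ler_sum => a _.
    have -> : fourier h a ^+ 4 = F a * F a by rewrite /F -exprD.
    by rewrite ler_wpM2l ?sqr_ge0 //; exact: Hmax.
  by rewrite -mulr_suml hP mul1r.
have HM1 : F a0 <= 1.
  rewrite -hP (bigD1 a0) //= lerDl; apply: sumr_ge0 => a _; exact: sqr_ge0.
set c := `|fourier h a0|.
have hc2 : F a0 = c ^+ 2 by rewrite /F /c real_normK ?num_real.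
have hc0 : 0 <= c by exact: normr_ge0.
have hce : eps <= c by rewrite hc2 in HM HM1; nra.
pose b : 'F_2 := if fourier h a0 < 0 then 1 else 0.
have hb : sgnF2 R b * fourier h a0 = c.
  rewrite /b /c; case: ifP => H.
    by rewrite sgnF2_1 ltr0_norm // mulN1r.
  by rewrite sgnF2_0 mul1r ger0_norm // leNgt H.
exists (\sum_(i : 'I_n) \sum_(j : 'I_n) (if (i < j)%N then B i j *: ('X_i * 'X_j) else 0)
    + \sum_(i : 'I_n) a0 0 i *: 'X_i + b%:MP).
split; first by case: (@quad_eval n B a0 b 0).
set G := quad_poly_fun R _.
have Geval : forall x, G x = sgnF2 R (qf B x) * sgnF2 R (dotF2 a0 x) * sgnF2 R b.
  by move=> x; rewrite /G /quad_poly_fun (proj1 (@quad_eval n B a0 b x : _ /\ _)) !sgnF2D.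
have hN := N_neq0 R n.
rewrite /dist.
have -> : #|[set x | f x != G x]|%:R = \sum_x ((f x != G x)%:R : R).
  rewrite -sumr_const big_mkcond /=; apply: eq_bigr => x _; rewrite inE.
  by case: ifP.
have Gpm : forall x, G x = 1 \/ G x = -1.
  move=> x; rewrite Geval.
  by case: (sgnF2_pm R (qf B x)) => ->; case: (sgnF2_pm R (dotF2 a0 x)) => ->;
    case: (sgnF2_pm R b) => ->; rewrite ?mulr1 ?mulrN1 ?opprK; auto.
under eq_bigr do rewrite ind_pm //.
rewrite -mulr_suml sumrB sumr_const card_rvF2 natrX.
have -> : \sum_x f x * G x = 2 ^+ n * c.
  transitivity ((\sum_x h x * sgnF2 R (dotF2 a0 x)) * sgnF2 R b).
    rewrite mulr_suml; apply: eq_bigr => x _; rewrite Geval /h; ring.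
  have -> : \sum_x h x * sgnF2 R (dotF2 a0 x) = 2 ^+ n * fourier h a0.
    by rewrite /fourier mulrA mulfV ?mul1r.
  by rewrite -mulrA (mulrC (fourier h a0)) hb.
have -> : (2 ^+ n - 2 ^+ n * c) / 2 / 2 ^+ n = (1 - c) / 2 :> R.
  by field.
lra.
Qed.
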